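(* Let $T=\left[\begin{smallmatrix} R & M\\ N & S\end{smallmatrix}\right]$ and $T'=\left[\begin{smallmatrix} R' & M'\\ N' & S'\end{smallmatrix}\right]$ be Morita context rings with $R,S,R',S'$ indecomposable, and suppose the Morita context with which $T$ (or $T'$) is associated is strict. Then $\mathrm{Iso}_g(T,T')=\mathrm{Iso}_0(T,T')$.
   Context: All rings have an identity $1\neq 0$; a ring is indecomposable if its only central idempotents are $0$ and $1$. A Morita context $(R,S,M,N,f,g)$: rings $R,S$, an $R$-$S$-bimodule $M$, an $S$-$R$-bimodule $N$, bimodule morphisms $f:M\otimes_SN\to R$, $g:N\otimes_RM\to S$, with $[m,n]=f(m\otimes n)$, $(n,m)=g(n\otimes m)$ satisfying $[m,n]m'=m(n,m')$ and $n[m,n']=(n,m)n'$; it is strict if $f$ and $g$ are surjective. Its Morita context ring $T$ consists of formal matrices $\left[\begin{smallmatrix} r & m\\ n & s\end{smallmatrix}\right]$ with entrywise addition and product $\left[\begin{smallmatrix} r & m\\ n & s\end{smallmatrix}\right]\left[\begin{smallmatrix} r' & m'\\ n' & s'\end{smallmatrix}\right]=\left[\begin{smallmatrix} rr'+[m,n'] & rm'+ms'\\ nr'+sn' & (n,m')+ss'\end{smallmatrix}\right]$; similarly for $T'$. Grading: $T_{-1}=\left[\begin{smallmatrix} 0 & 0\\ N & 0\end{smallmatrix}\right]$, $T_0=\left[\begin{smallmatrix} R & 0\\ 0 & S\end{smallmatrix}\right]$, $T_1=\left[\begin{smallmatrix} 0 & M\\ 0 & 0\end{smallmatrix}\right]$,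 $T_i=0$ otherwise. $\mathrm{Iso}_g(T,T')$ is the set of ring isomorphisms $\phi:T\to T'$ that are graded ($\phi(T_i)\subseteq T'_i$ for all $i$) or anti-graded ($\phi(T_i)\subseteq T'_{-i}$ for all $i$). $\mathrm{Iso}_0(T,T')=\mathrm{Iso}_0^0(T,T')\cup\mathrm{Iso}_0^1(T,T')$, where $\mathrm{Iso}_0^0(T,T')$ is the set of maps $\phi\left(\left[\begin{smallmatrix} r & m\\ n & s\end{smallmatrix}\right]\right)=\left[\begin{smallmatrix}\gamma(r) & \gamma(r)m'_0-m'_0\delta(s)+u(m)\\ n'_0\gamma(r)-\delta(s)n'_0+v(n) & \delta(s)\end{smallmatrix}\right]$ with $\gamma:R\to R'$, $\delta:S\to S'$ ring isomorphisms, $u:M\to M'$, $v:N\to N'$ additive bijections with $u(rms)=\gamma(r)u(m)\delta(s)$, $v(snr)=\delta(s)v(n)\gamma(r)$, and $m'_0\in M'$, $n'_0\in N'$ with $[m'_0,N']=0$, $(N',m'_0)=0$, $[M',n'_0]=0$, $(n'_0,M')=0$, $[u(m),v(n)]=\gamma([m,n])$, $(v(n),u(m))=\delta((n,m))$; and $\mathrm{Iso}_0^1(T,T')$ is the set of maps $\psi\left(\left[\begin{smallmatrix} r & m\\ n & s\end{smallmatrix}\right]\right)=\left[\begin{smallmatrix}\sigma(s) & m'_*\rho(r)-\sigma(s)m'_*+\nu(n)\\ \rho(r)n'_*-n'_*\sigma(s)+\mu(m) & \rho(r)\end{smallmatrix}\right]$ with $\rho:R\to S'$, $\sigma:S\to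 R'$ ring isomorphisms, $\mu:M\to N'$, $\nu:N\to M'$ additive bijections with $\mu(rms)=\rho(r)\mu(m)\sigma(s)$, $\nu(snr)=\sigma(s)\nu(n)\rho(r)$, and $m'_*\in M'$, $n'_*\in N'$ with $[m'_*,N']=0$, $(N',m'_* )=0$, $[M',n'_*]=0$, $(n'_*,M')=0$, $(\mu(m),\nu(n))=\rho([m,n])$, $[\nu(n),\mu(m)]=\sigma((n,m))$. *)

(* Defs.v *)
From HB Require Import structures.
From mathcomp Require Import all_boot all_order all_algebra.
Set Implicit Arguments. Unset Strict Implicit. Unset Printing Implicit Defensive.
Import Order.TTheory GRing.Theory Num.Theory.
Local Open Scope ring_scope.

(* A Morita context (R,S,M,N,f,g): M is an R-S-bimodule, N an S-R-bimodule,
   [m,n] = f(m (x) n) and (n,m) = g(n (x) m).  A bimodule map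
   f : M (x)_S N -> R is the same as an S-balanced biadditive map
   M x N -> R which is R-linear on the left and R-linear on the right. *)
Record morita_context := MoritaContext {
  mcR : nzRingType; mcS : nzRingType; mcM : zmodType; mcN : zmodType;
  lM : mcR -> mcM -> mcM;
  rM : mcM -> mcS -> mcM;
  lN : mcS -> mcN -> mcN;
  rN : mcN -> mcR -> mcN;
  brk : mcM -> mcN -> mcR;
  par : mcN -> mcM -> mcS;
  lM_addl : forall r1 r2 m, lM (r1 + r2) m = lM r1 m + lM r2 m;
  lM_addr : forall r m1 m2, lM r (m1 + m2) = lM r m1 + lM r m2;
  lM_mul : forall r1 r2 m, lM (r1 * r2) m = lM r1 (lM r2 m);
  lM_one : forall m, lM 1 m = m;
  rM_addl : forall m1 m2 s, rM (m1 + m2) s = rM m1 s + rM m2 s;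
  rM_addr : forall m s1 s2, rM m (s1 + s2) = rM m s1 + rM m s2;
  rM_mul : forall m s1 s2, rM m (s1 * s2) = rM (rM m s1) s2;
  rM_one : forall m, rM m 1 = m;
  lrM : forall r m s, rM (lM r m) s = lM r (rM m s);
  lN_addl : forall s1 s2 n, lN (s1 + s2) n = lN s1 n + lN s2 n;
  lN_addr : forall s n1 n2, lN s (n1 + n2) = lN s n1 + lN s n2;
  lN_mul : forall s1 s2 n, lN (s1 * s2) n = lN s1 (lN s2 n);
  lN_one : forall n, lN 1 n = n;
  rN_addl : forall n1 n2 r, rN (n1 + n2) r = rN n1 r + rN n2 r;
  rN_addr : forall n r1 r2, rN n (r1 + r2) = rN n r1 + rN n r2;
  rN_mul : forall n r1 r2, rN n (r1 * r2) = rN (rN n r1) r2;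
  rN_one : forall n, rN n 1 = n;
  lrN : forall s n r, rN (lN s n) r = lN s (rN n r);
  brk_addl : forall m1 m2 n, brk (m1 + m2) n = brk m1 n + brk m2 n;
  brk_addr : forall m n1 n2, brk m (n1 + n2) = brk m n1 + brk m n2;
  brk_bal : forall m s n, brk (rM m s) n = brk m (lN s n);
  brk_lin_l : forall r m n, brk (lM r m) n = r * brk m n;
  brk_lin_r : forall m n r, brk m (rN n r) = brk m n * r;
  par_addl : forall n1 n2 m, par (n1 + n2) m = par n1 m + par n2 m;
  par_addr : forall n m1 m2, par n (m1 + m2) = par n m1 + par n m2;
  par_bal : forall n r m, par (rN n r) m = par n (lM r m);
  par_lin_l : forall s n m, par (lN s n) m = s * par n m;
  par_lin_r : forall n m s, par n (rM m s) = par n m * s;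
  mc_assoc1 : forall m n m', lM (brk m n) m' = rM m (par n m');
  mc_assoc2 : forall n m n', rN n (brk m n') = lN (par n m) n'
}.

(* Strictness: f and g surjective.  Elements of M (x)_S N are finite sums of
   simple tensors, so surjectivity of f means every r is a finite sum of
   brackets [m_i, n_i]. *)
Definition strict (C : morita_context) : Prop :=
  (forall r : mcR C, exists k (m : 'I_k -> mcM C) (n : 'I_k -> mcN C),
      r = \sum_(i < k) brk (m i) (n i)) /\
  (forall s : mcS C, exists k (n : 'I_k -> mcN C) (m : 'I_k -> mcM C),
      s = \sum_(i < k) par (n i) (m i)).

Definition indecomposable (R : nzRingType) : Prop :=
  forall e : R, e * e = e -> (forall x : R, e * x = x * e) -> e = 0 \/ e = 1.

(* The Morita context ring T: formal matrices [[r, m], [n, s]]. *)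
Record mc_elt (C : morita_context) := MkElt
  { er : mcR C; em : mcM C; en : mcN C; es : mcS C }.

Definition mc_zero (C : morita_context) : mc_elt C := MkElt 0 0 0 0.
Definition mc_one (C : morita_context) : mc_elt C := MkElt 1 0 0 1.
Definition mc_add (C : morita_context) (x y : mc_elt C) : mc_elt C :=
  MkElt (er x + er y) (em x + em y) (en x + en y) (es x + es y).
Definition mc_mul (C : morita_context) (x y : mc_elt C) : mc_elt C :=
  MkElt (er x * er y + brk (em x) (en y))
        (lM (er x) (em y) + rM (em x) (es y))
        (rN (en x) (er y) + lN (es x) (en y))
        (par (en x) (em y) + es x * es y).

Definition mc_ring_iso (C C' : morita_context) (phi : mc_elt C -> mc_elt C') :=
  bijective phi /\
  (forall x y, phi (mc_add x y) = mc_add (phi x) (phi y)) /\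
  (forall x y, phi (mc_mul x y) = mc_mul (phi x) (phi y)) /\
  phi (mc_one C) = mc_one C'.

Definition mc_hom (C : morita_context) (i : int) (x : mc_elt C) : Prop :=
  if i == 0 then em x = 0 /\ en x = 0
  else if i == 1 then er x = 0 /\ en x = 0 /\ es x = 0
  else if i == -1 then er x = 0 /\ em x = 0 /\ es x = 0
  else x = mc_zero C.

Definition graded (C C' : morita_context) (phi : mc_elt C -> mc_elt C') :=
  forall (i : int) x, mc_hom i x -> mc_hom i (phi x).
Definition antigraded (C C' : morita_context) (phi : mc_elt C -> mc_elt C') :=
  forall (i : int) x, mc_hom i x -> mc_hom (- i) (phi x).

Definition Iso_g (C C' : morita_context) (phi : mc_elt C -> mc_elt C') :=
  mc_ring_iso phi /\ (graded phi \/ antigraded phi).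

Definition ring_iso (R R' : nzRingType) (f : R -> R') :=
  bijective f /\ (forall x y, f (x + y) = f x + f y) /\
  (forall x y, f (x * y) = f x * f y) /\ f 1 = 1.
Definition add_bij (A B : zmodType) (f : A -> B) :=
  bijective f /\ (forall x y, f (x + y) = f x + f y).

Definition Iso_0_0 (C C' : morita_context) (phi : mc_elt C -> mc_elt C') :=
  exists (gam : mcR C -> mcR C') (del : mcS C -> mcS C')
         (u : mcM C -> mcM C') (v : mcN C -> mcN C')
         (m0 : mcM C') (n0 : mcN C'),
  ring_iso gam /\ ring_iso del /\ add_bij u /\ add_bij v /\
      (forall r m s, u (rM (lM r m) s) = lM (gam r) (rM (u m) (del s))) /\
      (forall s n r, v (rN (lN s n) r) = lN (del s) (rN (v n) (gam r))) /\
      (forall n' : mcN C', brk m0 n' = 0) /\ (forall n' : mcN C', par n' m0 = 0) /\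
      (forall m' : mcM C', brk m' n0 = 0) /\ (forall m' : mcM C', par n0 m' = 0) /\
      (forall m n, brk (u m) (v n) = gam (brk m n)) /\
      (forall m n, par (v n) (u m) = del (par n m)) /\
      (forall x, phi x =
         MkElt (gam (er x))
               (lM (gam (er x)) m0 - rM m0 (del (es x)) + u (em x))
               (rN n0 (gam (er x)) - lN (del (es x)) n0 + v (en x))
               (del (es x))).

Definition Iso_0_1 (C C' : morita_context) (psi : mc_elt C -> mc_elt C') :=
  exists (rho : mcR C -> mcS C') (sig : mcS C -> mcR C')
         (mu : mcM C -> mcN C') (nu : mcN C -> mcM C')
         (ms : mcM C') (ns : mcN C'),
  ring_iso rho /\ ring_iso sig /\ add_bij mu /\ add_bij nu /\
      (forall r m s, mu (rM (lM r m) s) = lN (rho r) (rN (mu m) (sig s))) /\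
      (forall s n r, nu (rN (lN s n) r) = lM (sig s) (rM (nu n) (rho r))) /\
      (forall n' : mcN C', brk ms n' = 0) /\ (forall n' : mcN C', par n' ms = 0) /\
      (forall m' : mcM C', brk m' ns = 0) /\ (forall m' : mcM C', par ns m' = 0) /\
      (forall m n, par (mu m) (nu n) = rho (brk m n)) /\
      (forall m n, brk (nu n) (mu m) = sig (par n m)) /\
      (forall x, psi x =
         MkElt (sig (es x))
               (rM ms (rho (er x)) - lM (sig (es x)) ms + nu (en x))
               (lN (rho (er x)) ns - rN ns (sig (es x)) + mu (em x))
               (rho (er x))).

Definition Iso_0 (C C' : morita_context) (phi : mc_elt C -> mc_elt C') :=
  Iso_0_0 phi \/ Iso_0_1 phi.

(* Main.v *)
Require Import Defs.
From mathcomp Require Import all_boot all_order all_algebra.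
Set Implicit Arguments. Unset Strict Implicit. Unset Printing Implicit Defensive.
Import GRing.Theory.
Local Open Scope ring_scope.

Lemma add0f (A B : zmodType) (f : A -> B) :
  (forall x y, f (x + y) = f x + f y) -> f 0 = 0.
Proof. move=> h; have := h 0 0; rewrite addr0 => e.
by apply: (addrI (f 0)); rewrite addr0 -e. Qed.

Section Basic.
Variable C : morita_context.
Lemma brk0l (n : mcN C) : brk 0 n = 0.
Proof. by apply: (@add0f _ _ (fun m => brk m n)) => x y; rewrite brk_addl. Qed.
Lemma brk0r (m : mcM C) : brk m 0 = 0.
Proof. by apply: (@add0f _ _ (fun n => brk m n)) => x y; rewrite brk_addr. Qed.
Lemma par0l (m : mcM C) : par 0 m = 0.
Proof. by apply: (@add0f _ _ (fun n => par n m)) => x y; rewrite par_addl. Qed.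
Lemma par0r (n : mcN C) : par n 0 = 0.
Proof. by apply: (@add0f _ _ (fun m => par n m)) => x y; rewrite par_addr. Qed.
Lemma lM0l (m : mcM C) : lM 0 m = 0.
Proof. by apply: (@add0f _ _ (fun r => lM r m)) => x y; rewrite lM_addl. Qed.
Lemma lM0r (r : mcR C) : lM r 0 = 0.
Proof. by apply: (@add0f _ _ (fun m => lM r m)) => x y; rewrite lM_addr. Qed.
Lemma rM0l (s : mcS C) : rM 0 s = 0.
Proof. by apply: (@add0f _ _ (fun m => rM m s)) => x y; rewrite rM_addl. Qed.
Lemma rM0r (m : mcM C) : rM m 0 = 0.
Proof. by apply: (@add0f _ _ (fun s => rM m s)) => x y; rewrite rM_addr. Qed.
Lemma lN0l (n : mcN C) : lN 0 n = 0.
Proof. by apply: (@add0f _ _ (fun s => lN s n)) => x y; rewrite lN_addl. Qed.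
Lemma lN0r (s : mcS C) : lN s 0 = 0.
Proof. by apply: (@add0f _ _ (fun n => lN s n)) => x y; rewrite lN_addr. Qed.
Lemma rN0l (r : mcR C) : rN 0 r = 0.
Proof. by apply: (@add0f _ _ (fun n => rN n r)) => x y; rewrite rN_addl. Qed.
Lemma rN0r (n : mcN C) : rN n 0 = 0.
Proof. by apply: (@add0f _ _ (fun r => rN n r)) => x y; rewrite rN_addr. Qed.
End Basic.

Definition mcE := (brk0l, brk0r, par0l, par0r, lM0l, lM0r, rM0l, rM0r,
  lN0l, lN0r, rN0l, rN0r, lM_one, rM_one, lN_one, rN_one,
  mulr0, mul0r, mulr1, mul1r, addr0, add0r, subr0, sub0r, oppr0).

Definition E1 (C : morita_context) : mc_elt C := MkElt 1 0 0 0.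
Definition E2 (C : morita_context) : mc_elt C := MkElt 0 0 0 1.

Section Sand.
Variable C : morita_context.
Implicit Types x : mc_elt C.
Lemma s11 x : mc_mul (mc_mul (E1 C) x) (E1 C) = MkElt (er x) 0 0 0.
Proof. by case: x => r m n s; rewrite /mc_mul /= ?mcE. Qed.
Lemma s12 x : mc_mul (mc_mul (E1 C) x) (E2 C) = MkElt 0 (em x) 0 0.
Proof. by case: x => r m n s; rewrite /mc_mul /= ?mcE. Qed.
Lemma s21 x : mc_mul (mc_mul (E2 C) x) (E1 C) = MkElt 0 0 (en x) 0.
Proof. by case: x => r m n s; rewrite /mc_mul /= ?mcE. Qed.
Lemma s22 x : mc_mul (mc_mul (E2 C) x) (E2 C) = MkElt 0 0 0 (es x).
Proof. by case: x => r m n s; rewrite /mc_mul /= ?mcE. Qed.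
Lemma decomp4 x : x = mc_add (mc_add (mc_add (MkElt (er x) 0 0 0) (MkElt 0 (em x) 0 0))
   (MkElt 0 0 (en x) 0)) (MkElt 0 0 0 (es x)).
Proof. by case: x => r m n s; rewrite /mc_add /= ?mcE. Qed.
Lemma E12 : mc_add (E1 C) (E2 C) = mc_one C.
Proof. by rewrite /mc_add /= ?mcE. Qed.
End Sand.
Section Hom.
Variable C : morita_context.
Implicit Types x : mc_elt C.
Lemma hom0 x : mc_hom 0 x <-> em x = 0 /\ en x = 0.
Proof. by []. Qed.
Lemma hom1 x : mc_hom 1 x <-> er x = 0 /\ en x = 0 /\ es x = 0.
Proof. by []. Qed.
Lemma homm1 x : mc_hom (-1) x <-> er x = 0 /\ em x = 0 /\ es x = 0.
Proof. by []. Qed.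
Lemma homo (i : int) x : i != 0 -> i != 1 -> i != -1 -> mc_hom i x <-> x = mc_zero C.
Proof. by move=> a b c; rewrite /mc_hom (negbTE a) (negbTE b) (negbTE c). Qed.
End Hom.

Lemma one_zero (C : morita_context) (k : nat) (n : 'I_k -> mcN C) (m : 'I_k -> mcM C) :
  1 = \sum_(i < k) par (n i) (m i) ->
  (forall m0 : mcM C, (forall n', brk m0 n' = 0) -> m0 = 0) /\
  (forall n0 : mcN C, (forall m', brk m' n0 = 0) -> n0 = 0).
Proof.
move=> h; split.
- move=> m0 hm; rewrite -(rM_one m0) h.
  rewrite (big_morph (rM m0) (rM_addr m0) (rM0r m0)).
  by apply: big1 => i _; rewrite -mc_assoc1 hm lM0l.
- move=> n0 hn; rewrite -(lN_one n0) h.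
  rewrite (big_morph (fun s => lN s n0) (fun a b => lN_addl a b n0) (lN0l n0)).
  by apply: big1 => i _; rewrite -mc_assoc2 hn rN0r.
Qed.
Lemma ring_iso_props (R R' : nzRingType) (f : R -> R') : ring_iso f ->
  f 0 = 0 /\ bijective f /\ (forall x y, f (x + y) = f x + f y) /\
  (forall x y, f (x * y) = f x * f y) /\ f 1 = 1.
Proof. by case=> b [a [m o]]; do !split => //; apply: add0f. Qed.
Lemma add_bij_props (A B : zmodType) (f : A -> B) : add_bij f ->
  f 0 = 0 /\ bijective f /\ (forall x y, f (x + y) = f x + f y).
Proof. by case=> b a; do !split => //; apply: add0f. Qed.

Lemma good00 (C C' : morita_context) (phi : mc_elt C -> mc_elt C')
  (gam : mcR C -> mcR C') (del : mcS C -> mcS C')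
  (u : mcM C -> mcM C') (v : mcN C -> mcN C') :
  ring_iso gam -> ring_iso del -> add_bij u -> add_bij v ->
  (forall r m s, u (rM (lM r m) s) = lM (gam r) (rM (u m) (del s))) ->
  (forall s n r, v (rN (lN s n) r) = lN (del s) (rN (v n) (gam r))) ->
  (forall m n, brk (u m) (v n) = gam (brk m n)) ->
  (forall m n, par (v n) (u m) = del (par n m)) ->
  (forall x, phi x = MkElt (gam (er x)) (u (em x)) (v (en x)) (del (es x))) ->
  Iso_g phi.
Proof.
move=> /ring_iso_props [g0 [[gi gK gKi] [gD [gM g1]]]].
move=> /ring_iso_props [d0 [[di dK dKi] [dD [dM d1]]]].
move=> /add_bij_props [u0 [[ui uK uKi] uD]].
move=> /add_bij_props [v0 [[vi vK vKi] vD]].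
move=> hu hv hb hp hx.
have uL r m : u (lM r m) = lM (gam r) (u m).
  by rewrite -{1}(rM_one (lM r m)) hu d1 rM_one.
have uR m s : u (rM m s) = rM (u m) (del s).
  by rewrite -{1}(lM_one m) hu g1 lM_one.
have vL s n : v (lN s n) = lN (del s) (v n).
  by rewrite -{1}(rN_one (lN s n)) hv g1 rN_one.
have vR n r : v (rN n r) = rN (v n) (gam r).
  by rewrite -{1}(lN_one n) hv d1 lN_one.
split; last first.
  left=> i x; have [->|i0] := eqVneq i 0.
    by move=> /hom0[e1 e2]; apply/hom0; rewrite hx /= e1 e2 u0 v0.
  have [->|i1] := eqVneq i 1.
    by move=> /hom1[e1 [e2 e3]]; apply/hom1; rewrite hx /= e1 e2 e3 g0 v0 d0.
  have [->|im1] := eqVneq i (-1).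
    by move=> /homm1[e1 [e2 e3]]; apply/homm1; rewrite hx /= e1 e2 e3 g0 u0 d0.
  by move=> /(homo _ i0 i1 im1) ->; apply/(homo _ i0 i1 im1); rewrite hx /= g0 u0 v0 d0.
split.
  exists (fun x' => MkElt (gi (er x')) (ui (em x')) (vi (en x')) (di (es x'))).
    by case=> r m n s; rewrite hx /= ?gK ?uK ?vK ?dK.
  by case=> r m n s; rewrite hx /= ?gKi ?uKi ?vKi ?dKi.
split.
  by case=> r m n s [r' m' n' s']; rewrite !hx /= gD uD vD dD.
split.
  case=> r m n s [r' m' n' s']; rewrite !hx /mc_mul /=.
  by rewrite gD gM hb uD uL uR vD vR vL dD dM hp.
by rewrite hx /= g1 u0 v0 d1.
Qed.

Lemma good01 (C C' : morita_context) (psi : mc_elt C -> mc_elt C')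
  (rho : mcR C -> mcS C') (sig : mcS C -> mcR C')
  (mu : mcM C -> mcN C') (nu : mcN C -> mcM C') :
  ring_iso rho -> ring_iso sig -> add_bij mu -> add_bij nu ->
  (forall r m s, mu (rM (lM r m) s) = lN (rho r) (rN (mu m) (sig s))) ->
  (forall s n r, nu (rN (lN s n) r) = lM (sig s) (rM (nu n) (rho r))) ->
  (forall m n, par (mu m) (nu n) = rho (brk m n)) ->
  (forall m n, brk (nu n) (mu m) = sig (par n m)) ->
  (forall x, psi x = MkElt (sig (es x)) (nu (en x)) (mu (em x)) (rho (er x))) ->
  Iso_g psi.
Proof.
move=> /ring_iso_props [g0 [[gi gK gKi] [gD [gM g1]]]].
move=> /ring_iso_props [d0 [[di dK dKi] [dD [dM d1]]]].
move=> /add_bij_props [u0 [[ui uK uKi] uD]].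
move=> /add_bij_props [v0 [[vi vK vKi] vD]].
move=> hu hv hb hp hx.
have uL r m : mu (lM r m) = lN (rho r) (mu m).
  by rewrite -{1}(rM_one (lM r m)) hu d1 rN_one.
have uR m s : mu (rM m s) = rN (mu m) (sig s).
  by rewrite -{1}(lM_one m) hu g1 lN_one.
have vL s n : nu (lN s n) = lM (sig s) (nu n).
  by rewrite -{1}(rN_one (lN s n)) hv g1 rM_one.
have vR n r : nu (rN n r) = rM (nu n) (rho r).
  by rewrite -{1}(lN_one n) hv d1 lM_one.
split; last first.
  right=> i x; have [->|i0] := eqVneq i 0.
    by rewrite oppr0 => /hom0[e1 e2]; apply/hom0; rewrite hx /= e1 e2 u0 v0.
  have [->|i1] := eqVneq i 1.
    by move=> /hom1[e1 [e2 e3]]; apply/homm1; rewrite hx /= e1 e2 e3 g0 v0 d0.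
  have [->|im1] := eqVneq i (-1).
    by rewrite opprK => /homm1[e1 [e2 e3]]; apply/hom1; rewrite hx /= e1 e2 e3 g0 u0 d0.
  have j0 : - i != 0 by rewrite oppr_eq0.
  have j1 : - i != 1 by rewrite eqr_oppLR.
  have jm1 : - i != -1 by rewrite eqr_oppLR opprK.
  by move=> /(homo _ i0 i1 im1) ->; apply/(homo _ j0 j1 jm1); rewrite hx /= g0 u0 v0 d0.
split.
  exists (fun x' => MkElt (gi (es x')) (ui (en x')) (vi (em x')) (di (er x'))).
    by case=> r m n s; rewrite hx /= ?gK ?uK ?vK ?dK.
  by case=> r m n s; rewrite hx /= ?gKi ?uKi ?vKi ?dKi.
split.
  by case=> r m n s [r' m' n' s']; rewrite !hx /= gD uD vD dD.
split.
  case=> r m n s [r' m' n' s']; rewrite !hx /mc_mul /=.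
  rewrite gD gM hb uD uL uR vD vR vL dD dM hp.
  by congr MkElt; rewrite addrC.
by rewrite hx /= g1 u0 v0 d1.
Qed.
Lemma back_dir (C C' : morita_context) (phi : mc_elt C -> mc_elt C') :
  strict C \/ strict C' -> Iso_0 phi -> Iso_g phi.
Proof.
move=> hs [[gam [del [u [v [m0 [n0 [hg [hd [hu [hv [h1 [h2 [b1 [_ [b2 [_ [hb [hp hx]]]]]]]]]]]]]]]]]] |
          [rho [sig [mu [nu [m0 [n0 [hg [hd [hu [hv [h1 [h2 [b1 [_ [b2 [_ [hb [hp hx]]]]]]]]]]]]]]]]]]].
- have [k [n [m e]]] : exists k (n : 'I_k -> mcN C') (m : 'I_k -> mcM C'),
      (1 : mcS C') = \sum_(i < k) par (n i) (m i).
    case: hs => [[_ hS] | [_ hS]]; last exact: hS.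
    have [k [n [m e]]] := hS 1.
    have [d0 [_ [dD [_ d1]]]] := ring_iso_props hd.
    exists k, (fun i => v (n i)), (fun i => u (m i)).
    by rewrite -d1 e (big_morph del dD d0); apply: eq_bigr => i _; rewrite hp.
  have [z1 z2] := one_zero e.
  rewrite (z1 m0 b1) (z2 n0 b2) in hx.
  apply: (good00 hg hd hu hv h1 h2 hb hp) => x.
  by rewrite hx ?mcE.
- have [k [n [m e]]] : exists k (n : 'I_k -> mcN C') (m : 'I_k -> mcM C'),
      (1 : mcS C') = \sum_(i < k) par (n i) (m i).
    case: hs => [[hR _] | [_ hS]]; last exact: hS.
    have [k [m [n e]]] := hR 1.
    have [d0 [_ [dD [_ d1]]]] := ring_iso_props hg.
    exists k, (fun i => mu (m i)), (fun i => nu (n i)).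
    by rewrite -d1 e (big_morph rho dD d0); apply: eq_bigr => i _; rewrite hb.
  have [z1 z2] := one_zero e.
  rewrite (z1 m0 b1) (z2 n0 b2) in hx.
  apply: (good01 hg hd hu hv h1 h2 hb hp) => x.
  by rewrite hx ?mcE.
Qed.
Ltac simpz g0 u0 v0 d0 := rewrite /mc_mul /mc_add /= ?g0 ?u0 ?v0 ?d0 ?mcE ?g0 ?u0 ?v0 ?d0 ?mcE.

Lemma caseA (C C' : morita_context) (phi : mc_elt C -> mc_elt C') g :
  cancel phi g -> cancel g phi ->
  (forall x y, phi (mc_add x y) = mc_add (phi x) (phi y)) ->
  (forall x y, phi (mc_mul x y) = mc_mul (phi x) (phi y)) ->
  phi (mc_one C) = mc_one C' -> phi (E1 C) = E1 C' -> phi (E2 C) = E2 C' ->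
  Iso_0_0 phi.
Proof.
move=> gK gKi hadd hmul hone pE1 pE2.
have hmul3 x y z : phi (mc_mul (mc_mul x y) z) = mc_mul (mc_mul (phi x) (phi y)) (phi z).
  by rewrite !hmul.
pose gam r := er (phi (MkElt r 0 0 0)). pose u m := em (phi (MkElt 0 m 0 0)).
pose v n := en (phi (MkElt 0 0 n 0)). pose del s := es (phi (MkElt 0 0 0 s)).
have p1 r : phi (MkElt r 0 0 0) = MkElt (gam r) 0 0 0.
  have e : MkElt r 0 0 0 = mc_mul (mc_mul (E1 C) (MkElt r 0 0 0)) (E1 C) by rewrite s11.
  by rewrite {1}e hmul3 pE1 s11.
have p2 m : phi (MkElt 0 m 0 0) = MkElt 0 (u m) 0 0.
  have e : MkElt 0 m 0 0 = mc_mul (mc_mul (E1 C) (MkElt 0 m 0 0)) (E2 C) by rewrite s12.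
  by rewrite {1}e hmul3 pE1 pE2 s12.
have p3 n : phi (MkElt 0 0 n 0) = MkElt 0 0 (v n) 0.
  have e : MkElt 0 0 n 0 = mc_mul (mc_mul (E2 C) (MkElt 0 0 n 0)) (E1 C) by rewrite s21.
  by rewrite {1}e hmul3 pE1 pE2 s21.
have p4 s : phi (MkElt 0 0 0 s) = MkElt 0 0 0 (del s).
  have e : MkElt 0 0 0 s = mc_mul (mc_mul (E2 C) (MkElt 0 0 0 s)) (E2 C) by rewrite s22.
  by rewrite {1}e hmul3 pE2 s22.
have phiA x : phi x = MkElt (gam (er x)) (u (em x)) (v (en x)) (del (es x)).
  by rewrite {1}(decomp4 x) !hadd p1 p2 p3 p4 /mc_add /= ?mcE.
clearbody gam u v del; clear p1 p2 p3 p4.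
have gD r r' : gam (r + r') = gam r + gam r'.
  by have := congr1 (@er _) (hadd (MkElt r 0 0 0) (MkElt r' 0 0 0)); rewrite !phiA.
have uD r r' : u (r + r') = u r + u r'.
  by have := congr1 (@em _) (hadd (MkElt 0 r 0 0) (MkElt 0 r' 0 0)); rewrite !phiA.
have vD r r' : v (r + r') = v r + v r'.
  by have := congr1 (@en _) (hadd (MkElt 0 0 r 0) (MkElt 0 0 r' 0)); rewrite !phiA.
have dD r r' : del (r + r') = del r + del r'.
  by have := congr1 (@es _) (hadd (MkElt 0 0 0 r) (MkElt 0 0 0 r')); rewrite !phiA.
have g0 := add0f gD. have u0 := add0f uD. have v0 := add0f vD. have d0 := add0f dD.
have gM r r' : gam (r * r') = gam r * gam r'.
  have := congr1 (@er _) (hmul (MkElt r 0 0 0) (MkElt r' 0 0 0)); rewrite !phiA.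
  by simpz g0 u0 v0 d0.
have dM r r' : del (r * r') = del r * del r'.
  have := congr1 (@es _) (hmul (MkElt 0 0 0 r) (MkElt 0 0 0 r')); rewrite !phiA.
  by simpz g0 u0 v0 d0.
have g1 : gam 1 = 1 by have := congr1 (@er _) hone; rewrite phiA.
have d1 : del 1 = 1 by have := congr1 (@es _) hone; rewrite phiA.
have rg : ring_iso gam.
  split=> //; exists (fun r' => er (g (MkElt r' 0 0 0))) => [r|r'].
    have -> : MkElt (gam r) 0 0 0 = phi (MkElt r 0 0 0) by rewrite phiA /= u0 v0 d0.
    by rewrite gK.
  have := congr1 (@er _) (gKi (MkElt r' 0 0 0)); rewrite phiA /=; exact.
have rd : ring_iso del.
  split=> //; exists (fun r' => es (g (MkElt 0 0 0 r'))) => [r|r'].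
    have -> : MkElt 0 0 0 (del r) = phi (MkElt 0 0 0 r) by rewrite phiA /= u0 v0 g0.
    by rewrite gK.
  have := congr1 (@es _) (gKi (MkElt 0 0 0 r')); rewrite phiA /=; exact.
have bu : add_bij u.
  split=> //; exists (fun r' => em (g (MkElt 0 r' 0 0))) => [r|r'].
    have -> : MkElt 0 (u r) 0 0 = phi (MkElt 0 r 0 0) by rewrite phiA /= g0 v0 d0.
    by rewrite gK.
  have := congr1 (@em _) (gKi (MkElt 0 r' 0 0)); rewrite phiA /=; exact.
have bv : add_bij v.
  split=> //; exists (fun r' => en (g (MkElt 0 0 r' 0))) => [r|r'].
    have -> : MkElt 0 0 (v r) 0 = phi (MkElt 0 0 r 0) by rewrite phiA /= g0 u0 d0.
    by rewrite gK.
  have := congr1 (@en _) (gKi (MkElt 0 0 r' 0)); rewrite phiA /=; exact.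
have hu r m s : u (rM (lM r m) s) = lM (gam r) (rM (u m) (del s)).
  have := congr1 (@em _) (hmul3 (MkElt r 0 0 0) (MkElt 0 m 0 0) (MkElt 0 0 0 s)).
  by rewrite !phiA; simpz g0 u0 v0 d0 => ->; rewrite lrM.
have hv s n r : v (rN (lN s n) r) = lN (del s) (rN (v n) (gam r)).
  have := congr1 (@en _) (hmul3 (MkElt 0 0 0 s) (MkElt 0 0 n 0) (MkElt r 0 0 0)).
  by rewrite !phiA; simpz g0 u0 v0 d0 => ->; rewrite lrN.
have hb m n : brk (u m) (v n) = gam (brk m n).
  have := congr1 (@er _) (hmul (MkElt 0 m 0 0) (MkElt 0 0 n 0)).
  by rewrite !phiA; simpz g0 u0 v0 d0.
have hp m n : par (v n) (u m) = del (par n m).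
  have := congr1 (@es _) (hmul (MkElt 0 0 n 0) (MkElt 0 m 0 0)).
  by rewrite !phiA; simpz g0 u0 v0 d0.
exists gam, del, u, v, 0, 0.
refine (conj rg (conj rd (conj bu (conj bv (conj hu (conj hv
  (conj _ (conj _ (conj _ (conj _ (conj hb (conj hp _)))))))))))).
1-4: by move=> ?; rewrite ?mcE.
by move=> x; rewrite phiA ?mcE.
Qed.

Lemma caseB (C C' : morita_context) (phi : mc_elt C -> mc_elt C') g :
  cancel phi g -> cancel g phi ->
  (forall x y, phi (mc_add x y) = mc_add (phi x) (phi y)) ->
  (forall x y, phi (mc_mul x y) = mc_mul (phi x) (phi y)) ->
  phi (mc_one C) = mc_one C' -> phi (E1 C) = E2 C' -> phi (E2 C) = E1 C' ->
  Iso_0_1 phi.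
Proof.
move=> gK gKi hadd hmul hone pE1 pE2.
have hmul3 x y z : phi (mc_mul (mc_mul x y) z) = mc_mul (mc_mul (phi x) (phi y)) (phi z).
  by rewrite !hmul.
pose rho r := es (phi (MkElt r 0 0 0)). pose mu m := en (phi (MkElt 0 m 0 0)).
pose nu n := em (phi (MkElt 0 0 n 0)). pose sig s := er (phi (MkElt 0 0 0 s)).
have p1 r : phi (MkElt r 0 0 0) = MkElt 0 0 0 (rho r).
  have e : MkElt r 0 0 0 = mc_mul (mc_mul (E1 C) (MkElt r 0 0 0)) (E1 C) by rewrite s11.
  by rewrite {1}e hmul3 pE1 s22.
have p2 m : phi (MkElt 0 m 0 0) = MkElt 0 0 (mu m) 0.
  have e : MkElt 0 m 0 0 = mc_mul (mc_mul (E1 C) (MkElt 0 m 0 0)) (E2 C) by rewrite s12.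
  by rewrite {1}e hmul3 pE1 pE2 s21.
have p3 n : phi (MkElt 0 0 n 0) = MkElt 0 (nu n) 0 0.
  have e : MkElt 0 0 n 0 = mc_mul (mc_mul (E2 C) (MkElt 0 0 n 0)) (E1 C) by rewrite s21.
  by rewrite {1}e hmul3 pE1 pE2 s12.
have p4 s : phi (MkElt 0 0 0 s) = MkElt (sig s) 0 0 0.
  have e : MkElt 0 0 0 s = mc_mul (mc_mul (E2 C) (MkElt 0 0 0 s)) (E2 C) by rewrite s22.
  by rewrite {1}e hmul3 pE2 s11.
have phiB x : phi x = MkElt (sig (es x)) (nu (en x)) (mu (em x)) (rho (er x)).
  by rewrite {1}(decomp4 x) !hadd p1 p2 p3 p4 /mc_add /= ?mcE.
clearbody rho mu nu sig; clear p1 p2 p3 p4.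
have gD r r' : rho (r + r') = rho r + rho r'.
  by have := congr1 (@es _) (hadd (MkElt r 0 0 0) (MkElt r' 0 0 0)); rewrite !phiB.
have uD r r' : mu (r + r') = mu r + mu r'.
  by have := congr1 (@en _) (hadd (MkElt 0 r 0 0) (MkElt 0 r' 0 0)); rewrite !phiB.
have vD r r' : nu (r + r') = nu r + nu r'.
  by have := congr1 (@em _) (hadd (MkElt 0 0 r 0) (MkElt 0 0 r' 0)); rewrite !phiB.
have dD r r' : sig (r + r') = sig r + sig r'.
  by have := congr1 (@er _) (hadd (MkElt 0 0 0 r) (MkElt 0 0 0 r')); rewrite !phiB.
have g0 := add0f gD. have u0 := add0f uD. have v0 := add0f vD. have d0 := add0f dD.
have gM r r' : rho (r * r') = rho r * rho r'.
  have := congr1 (@es _) (hmul (MkElt r 0 0 0) (MkElt r' 0 0 0)); rewrite !phiB.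
  by simpz g0 u0 v0 d0.
have dM r r' : sig (r * r') = sig r * sig r'.
  have := congr1 (@er _) (hmul (MkElt 0 0 0 r) (MkElt 0 0 0 r')); rewrite !phiB.
  by simpz g0 u0 v0 d0.
have g1 : rho 1 = 1 by have := congr1 (@es _) hone; rewrite phiB.
have d1 : sig 1 = 1 by have := congr1 (@er _) hone; rewrite phiB.
have rg : ring_iso rho.
  split=> //; exists (fun r' => er (g (MkElt 0 0 0 r'))) => [r|r'].
    have -> : MkElt 0 0 0 (rho r) = phi (MkElt r 0 0 0) by rewrite phiB /= u0 v0 d0.
    by rewrite gK.
  have := congr1 (@es _) (gKi (MkElt 0 0 0 r')); rewrite phiB /=; exact.
have rd : ring_iso sig.
  split=> //; exists (fun r' => es (g (MkElt r' 0 0 0))) => [r|r'].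
    have -> : MkElt (sig r) 0 0 0 = phi (MkElt 0 0 0 r) by rewrite phiB /= u0 v0 g0.
    by rewrite gK.
  have := congr1 (@er _) (gKi (MkElt r' 0 0 0)); rewrite phiB /=; exact.
have bu : add_bij mu.
  split=> //; exists (fun r' => em (g (MkElt 0 0 r' 0))) => [r|r'].
    have -> : MkElt 0 0 (mu r) 0 = phi (MkElt 0 r 0 0) by rewrite phiB /= g0 v0 d0.
    by rewrite gK.
  have := congr1 (@en _) (gKi (MkElt 0 0 r' 0)); rewrite phiB /=; exact.
have bv : add_bij nu.
  split=> //; exists (fun r' => en (g (MkElt 0 r' 0 0))) => [r|r'].
    have -> : MkElt 0 (nu r) 0 0 = phi (MkElt 0 0 r 0) by rewrite phiB /= g0 u0 d0.
    by rewrite gK.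
  have := congr1 (@em _) (gKi (MkElt 0 r' 0 0)); rewrite phiB /=; exact.
have hu r m s : mu (rM (lM r m) s) = lN (rho r) (rN (mu m) (sig s)).
  have := congr1 (@en _) (hmul3 (MkElt r 0 0 0) (MkElt 0 m 0 0) (MkElt 0 0 0 s)).
  by rewrite !phiB; simpz g0 u0 v0 d0 => ->; rewrite lrN.
have hv s n r : nu (rN (lN s n) r) = lM (sig s) (rM (nu n) (rho r)).
  have := congr1 (@em _) (hmul3 (MkElt 0 0 0 s) (MkElt 0 0 n 0) (MkElt r 0 0 0)).
  by rewrite !phiB; simpz g0 u0 v0 d0 => ->; rewrite lrM.
have hb m n : par (mu m) (nu n) = rho (brk m n).
  have := congr1 (@es _) (hmul (MkElt 0 m 0 0) (MkElt 0 0 n 0)).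
  by rewrite !phiB; simpz g0 u0 v0 d0.
have hp m n : brk (nu n) (mu m) = sig (par n m).
  have := congr1 (@er _) (hmul (MkElt 0 0 n 0) (MkElt 0 m 0 0)).
  by rewrite !phiB; simpz g0 u0 v0 d0.
exists rho, sig, mu, nu, 0, 0.
refine (conj rg (conj rd (conj bu (conj bv (conj hu (conj hv
  (conj _ (conj _ (conj _ (conj _ (conj hb (conj hp _)))))))))))).
1-4: by move=> ?; rewrite ?mcE.
by move=> x; rewrite phiB ?mcE.
Qed.

Lemma self0 (A : zmodType) (x : A) : x = x + x -> x = 0.
Proof. by move=> h; apply: (addrI x); rewrite addr0 -h. Qed.

Lemma decomp3 (C : morita_context) (x : mc_elt C) :
  x = mc_add (MkElt (er x) 0 0 (es x)) (mc_add (MkElt 0 (em x) 0 0) (MkElt 0 0 (en x) 0)).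
Proof. by case: x => r m n s; rewrite /mc_add /= ?mcE. Qed.
Lemma E1E1 (C : morita_context) : mc_mul (E1 C) (E1 C) = E1 C.
Proof. by rewrite /mc_mul /= ?mcE. Qed.
Lemma comm1 (C : morita_context) (r : mcR C) (s : mcS C) :
  mc_mul (E1 C) (MkElt r 0 0 s) = mc_mul (MkElt r 0 0 s) (E1 C).
Proof. by rewrite /mc_mul /= ?mcE. Qed.

Lemma fwd (C C' : morita_context) (phi : mc_elt C -> mc_elt C') :
  indecomposable (mcR C') -> indecomposable (mcS C') -> Iso_g phi -> Iso_0 phi.
Proof.
move=> iR iS [[[g gK gKi] [hadd [hmul hone]]] hgr].
have H0 r s : em (phi (MkElt r 0 0 s)) = 0 /\ en (phi (MkElt r 0 0 s)) = 0.
  case: hgr => h; first exact: (h 0 (MkElt r 0 0 s) (conj erefl erefl)).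
  by have := h 0 (MkElt r 0 0 s) (conj erefl erefl); rewrite oppr0.
have H1 m : er (phi (MkElt 0 m 0 0)) = 0 /\ es (phi (MkElt 0 m 0 0)) = 0.
  case: hgr => h.
    by have /hom1[a [_ c]] := h 1 (MkElt 0 m 0 0) (conj erefl (conj erefl erefl)).
  by have /homm1[a [_ c]] := h 1 (MkElt 0 m 0 0) (conj erefl (conj erefl erefl)).
have Hm1 n : er (phi (MkElt 0 0 n 0)) = 0 /\ es (phi (MkElt 0 0 n 0)) = 0.
  case: hgr => h.
    by have /homm1[a [_ c]] := h (-1) (MkElt 0 0 n 0) (conj erefl (conj erefl erefl)).
  have := h (-1) (MkElt 0 0 n 0) (conj erefl (conj erefl erefl)).
  by rewrite opprK => /hom1[a [_ c]].
have phi0 : phi (mc_zero C) = MkElt 0 0 0 0.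
  have := hadd (mc_zero C) (mc_zero C).
  have -> : mc_add (mc_zero C) (mc_zero C) = mc_zero C by rewrite /mc_add /= !addr0.
  case: (phi (mc_zero C)) => r m n s; rewrite /mc_add /= => -[e1 e2 e3 e4].
  by rewrite (self0 e1) (self0 e2) (self0 e3) (self0 e4).
have lift (z : mc_elt C') : em z = 0 -> en z = 0 -> exists r s,
    er (phi (MkElt r 0 0 s)) = er z /\ es (phi (MkElt r 0 0 s)) = es z.
  move=> hm hn; have hy := gKi z; move: (g z) hy => y hy.
  exists (er y), (es y); split.
    have := congr1 (@er _) hy; rewrite {1}(decomp3 y) !hadd /=.
    by rewrite (proj1 (H1 _)) (proj1 (Hm1 _)) !addr0.
  have := congr1 (@es _) hy; rewrite {1}(decomp3 y) !hadd /=.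
  by rewrite (proj2 (H1 _)) (proj2 (Hm1 _)) !addr0.
have pE1 : phi (E1 C) = MkElt (er (phi (E1 C))) 0 0 (es (phi (E1 C))).
  have H0' : em (phi (E1 C)) = 0 /\ en (phi (E1 C)) = 0 := H0 1 0.
  by move: H0'; case: (phi (E1 C)) => r m n s /= [-> ->].
set a := er (phi (E1 C)) in pE1; set b := es (phi (E1 C)) in pE1.
clearbody a b.
have ia : a * a = a.
  have := congr1 (@er _) (hmul (E1 C) (E1 C)).
  by rewrite E1E1 pE1 /mc_mul /= ?mcE => h; rewrite -h.
have ib : b * b = b.
  have := congr1 (@es _) (hmul (E1 C) (E1 C)).
  by rewrite E1E1 pE1 /mc_mul /= ?mcE => h; rewrite -h.
have ca x : a * x = x * a.
  have [r [s [hr _]]] := lift (MkElt x 0 0 0) erefl erefl.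
  have := congr1 (@er _) (hmul (E1 C) (MkElt r 0 0 s)).
  by rewrite comm1 hmul pE1 /mc_mul /= ?mcE hr => ->.
have cb x : b * x = x * b.
  have [r [s [_ hs]]] := lift (MkElt 0 0 0 x) erefl erefl.
  have := congr1 (@es _) (hmul (E1 C) (MkElt r 0 0 s)).
  by rewrite comm1 hmul pE1 /mc_mul /= ?mcE hs => ->.
have pE2 : phi (E2 C) = MkElt (1 - a) 0 0 (1 - b).
  have := hadd (E1 C) (E2 C); rewrite E12 hone pE1.
  case: (phi (E2 C)) => r m n s; rewrite /mc_add /= => -[e1 e2 e3 e4].
  congr MkElt.
  - by rewrite e1 addrC addKr.
  - by move: e2; rewrite add0r.
  - by move: e3; rewrite add0r.
  - by rewrite e4 addrC addKr.
have [ea|ea] := iR a ia ca; have [eb|eb] := iS b ib cb;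
  rewrite ?ea ?eb ?subr0 ?subrr in pE1 pE2.
- exfalso; have : E1 C = mc_zero C by rewrite -(gK (E1 C)) pE1 -phi0 gK.
  by move/(congr1 (@er _)) => /= /eqP; rewrite oner_eq0.
- by right; apply: (caseB gK gKi hadd hmul hone pE1 pE2).
- by left; apply: (caseA gK gKi hadd hmul hone pE1 pE2).
- exfalso; have : E2 C = mc_zero C by rewrite -(gK (E2 C)) pE2 -phi0 gK.
  by move/(congr1 (@es _)) => /= /eqP; rewrite oner_eq0.
Qed.

Theorem corollary3p9 (C C' : morita_context) :
  indecomposable (mcR C) -> indecomposable (mcS C) ->
  indecomposable (mcR C') -> indecomposable (mcS C') ->
  strict C \/ strict C' ->
  forall phi : mc_elt C -> mc_elt C', Iso_g phi <-> Iso_0 phi.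
Proof.
move=> _ _ iR iS hs phi; split; [exact: fwd | exact: back_dir].
Qed.
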